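(* Let $\lambda>0$ and $\varepsilon>0$ be reals and $k>8$ an integer such that $\cos(2\pi/k)-\sin(2\pi/k)=\frac{\lambda+\varepsilon+1}{(\lambda+1)(\varepsilon+1)}$. Let $G=(V,E)$ be a $\lambda$-civilized unit disk graph and let $YY_k$ be its Yao-Yao graph. Then $YY_k$ has maximum degree at most $2k$, is a length $(1+\varepsilon)$-spanner of $G$, and has power stretch factor $(1+\varepsilon)^\beta$ with respect to $G$.
   Context: Unit disk graph (UDG): $V$ is a finite set of points in the Euclidean plane and $E=\{uv: |uv|\le 1\}$, with $|uv|$ Euclidean distance; $G$ is connected. $G$ is $\lambda$-civilized if no two nodes are at distance smaller than $\lambda$. A subgraph $H$ of $G$ on the same vertex set is a length $t$-spanner if for all $u,v$ the length of a shortest $uv$-path in $H$ is at most $t$ times that in $G$. $\beta$ is a fixed real constant (path loss gradient) between 2 and 5; the power of a path is $\sum |e|^\beta$ over its edges $e$; $H$ has power stretch factor $\rho$ if for all $u,v$ the power of a minimum-power $uv$-path in $H$ is at most $\rho$ times the power of a minimum-power $uv$-path in $G$. Cones: with $\theta=2\pi/k$, at each point $u$ the plane is partitioned into $k$ half-open half-closed cones with apex $u$ of angle $\theta$, bounded by $k$ equally spaced rays (same directions at every node); $K_u(v)$ is the cone with apex $u$ containing $v$; an edge $uw$ lies in $K_u$ if $w\in K_u$. Identifiers: nodes have distinct IDs; $\mathrm{ID}(\overrightarrow{uv})=(|uv|,\mathrm{ID}(u),\mathrm{ID}(v))$ compared lexicographically; $\mathrm{ID}(uv)=\min\{\mathrm{ID}(\overrightarrow{uv}),\mathrm{ID}(\overrightarrow{vu})\}$.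 Yao step: for each node $u$ and each cone $K_u$ containing some edge of $E$ incident to $u$, add to $E_Y$ the directed edge $\overrightarrow{uv}$ where $uv$ is the edge of $E$ in $K_u$ with lowest $\mathrm{ID}(uv)$. Reverse Yao step: starting from $E_{YY}=E_Y$, for each node $v$ and each cone $K_v$, among edges $\overrightarrow{uv}\in E_Y$ with $u\in K_v$ keep only the one of smallest ID. $YY_k=(V,E_{YY})$, viewed as undirected. *)

(* Defs.v *)
From Stdlib Require Import Reals Lra List ClassicalEpsilon.
Import ListNotations.
Open Scope R_scope.

Definition point : Type := (R * R)%type.

Definition dist (u v : point) : R :=
  sqrt ((fst u - fst v) ^ 2 + (snd u - snd v) ^ 2).

Definition udg_edge (V : list point) (u v : point) : Prop :=
  In u V /\ In v V /\ u <> v /\ dist u v <= 1.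

Fixpoint chain (E : point -> point -> Prop) (x : point) (l : list point) : Prop :=
  match l with
  | nil => True
  | y :: l' => E x y /\ chain E y l'
  end.

(* A uv-path in E: the walk u :: p ending at v. *)
Definition is_path (E : point -> point -> Prop) (u v : point) (p : list point) : Prop :=
  chain E u p /\ last p u = v.

Fixpoint path_cost (c : point -> point -> R) (x : point) (l : list point) : R :=
  match l with
  | nil => 0
  | y :: l' => c x y + path_cost c y l'
  end.

Definition path_length (u : point) (p : list point) : R := path_cost dist u p.

Definition path_power (beta : R) (u : point) (p : list point) : R :=
  path_cost (fun x y => Rpower (dist x y) beta) u p.

Definition connected (V : list point) : Prop :=
  forall u v, In u V -> In v V -> exists p, is_path (udg_edge V) u v p.

Definition civilized (lambda : R) (V : list point) : Prop :=
  forall u v, In u V -> In v V -> u <> v -> lambda <= dist u v.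

(* Cones: k cones of angle theta = 2 PI / k, bounded by rays of directions
   alpha + i*theta (same directions at every node). *)
Definition in_cone (k : nat) (alpha : R) (u : point) (i : nat) (w : point) : Prop :=
  (i < k)%nat /\
  exists r phi, 0 < r /\
    alpha + INR i * (2 * PI / INR k) <= phi /\
    phi < alpha + INR (S i) * (2 * PI / INR k) /\
    fst w = fst u + r * cos phi /\ snd w = snd u + r * sin phi.

Definition same_cone (k : nat) (alpha : R) (u v w : point) : Prop :=
  exists i, in_cone k alpha u i v /\ in_cone k alpha u i w.

Definition triple : Type := (R * nat * nat)%type.

Definition lex_lt (a b : triple) : Prop :=
  let '(a1, a2, a3) := a in
  let '(b1, b2, b3) := b in
  a1 < b1 \/ (a1 = b1 /\ ((a2 < b2)%nat \/ (a2 = b2 /\ (a3 < b3)%nat))).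

Definition lex_le (a b : triple) : Prop := lex_lt a b \/ a = b.

Definition lex_min (a b : triple) : triple :=
  if excluded_middle_informative (lex_lt b a) then b else a.

Definition dID (ID : point -> nat) (u v : point) : triple := (dist u v, ID u, ID v).

Definition eID (ID : point -> nat) (u v : point) : triple :=
  lex_min (dID ID u v) (dID ID v u).

Definition yao_edge (V : list point) (k : nat) (alpha : R) (ID : point -> nat)
  (u v : point) : Prop :=
  udg_edge V u v /\
  forall w, udg_edge V u w -> same_cone k alpha u v w -> lex_le (eID ID u v) (eID ID u w).

Definition yy_dedge (V : list point) (k : nat) (alpha : R) (ID : point -> nat)
  (u v : point) : Prop :=
  yao_edge V k alpha ID u v /\
  forall w, yao_edge V k alpha ID w v -> same_cone k alpha v u w ->
    lex_le (eID ID u v) (eID ID w v).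

Definition yy_edge (V : list point) (k : nat) (alpha : R) (ID : point -> nat)
  (u v : point) : Prop :=
  yy_dedge V k alpha ID u v \/ yy_dedge V k alpha ID v u.

Definition max_degree_le (V : list point) (H : point -> point -> Prop) (d : nat) : Prop :=
  forall u, In u V -> forall L, NoDup L -> (forall v, In v L -> H u v) -> (length L <= d)%nat.

(* Length t-spanner: shortest uv-path length in H <= t * that in G
   (for every G-path p there is an H-path at most t times as long). *)
Definition length_spanner (V : list point) (H G : point -> point -> Prop) (t : R) : Prop :=
  forall u v, In u V -> In v V -> forall p, is_path G u v p ->
    exists q, is_path H u v q /\ path_length u q <= t * path_length u p.

Definition power_stretch (V : list point) (beta : R) (H G : point -> point -> Prop) (rho : R) : Prop :=
  forall u v, In u V -> In v V -> forall p, is_path G u v p ->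
    exists q, is_path H u v q /\ path_power beta u q <= rho * path_power beta u p.

(* Main.v *)
Require Import Defs.
From Stdlib Require Import Reals Lra List ZArith Lia ClassicalEpsilon Classical.
Import ListNotations.
Open Scope R_scope.

Lemma cos_2piZ (x : R) (q : Z) : cos (x + 2 * IZR q * PI) = cos x /\ sin (x + 2 * IZR q * PI) = sin x.
Proof.
  destruct (Z_le_gt_dec 0 q) as [H|H].
  - rewrite <- (Z2Nat.id q H), <- INR_IZR_INZ. split; [apply cos_period|apply sin_period].
  - assert (Hq : q = (- Z.of_nat (Z.to_nat (- q)))%Z) by lia.
    set (n := Z.to_nat (-q)) in *. rewrite Hq, opp_IZR, <- INR_IZR_INZ.
    replace x with ((x + 2 * - INR n * PI) + 2 * INR n * PI) at 2 4 by ring.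
    rewrite cos_period, sin_period. split; reflexivity.
Qed.

Lemma polar_exists (dx dy : R) : dx <> 0 \/ dy <> 0 ->
  exists r phi, 0 < r /\ dx = r * cos phi /\ dy = r * sin phi.
Proof.
  intros Hne.
  assert (Hp : 0 < dx * dx + dy * dy).
  { destruct Hne as [H|H]; [assert (0 < dx*dx) by (apply Rsqr_pos_lt; auto); nra
    | assert (0 < dy*dy) by (apply Rsqr_pos_lt; auto); nra]. }
  set (r := sqrt (dx*dx+dy*dy)).
  assert (Hr : 0 < r) by (apply sqrt_lt_R0; auto).
  assert (Hr2 : r * r = dx*dx+dy*dy) by (apply sqrt_sqrt; lra).
  assert (Hb : -1 <= dx / r <= 1).
  { assert (Habs: dx*dx <= r*r) by nra.
    split; apply (Rmult_le_reg_r r); auto; unfold Rdiv; rewrite Rmult_assoc, Rinv_l; nra. }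
  assert (Hs : sqrt (1 - (dx/r)²) = Rabs dy / r).
  { replace (1 - (dx/r)²) with ((Rabs dy / r)²).
    - apply sqrt_Rsqr. unfold Rdiv; apply Rmult_le_pos; [apply Rabs_pos|left; apply Rinv_0_lt_compat; lra].
    - unfold Rsqr. assert (Ha: Rabs dy * Rabs dy = dy * dy).
      { rewrite <- Rabs_mult. apply Rabs_right. nra. }
      unfold Rdiv. replace (Rabs dy * / r * (Rabs dy * / r)) with (Rabs dy * Rabs dy / (r*r)) by (field; lra).
      rewrite Ha. replace (dx * / r * (dx * / r)) with (dx*dx/(r*r)) by (field; lra).
      rewrite Hr2. field. lra. }
  exists r.
  destruct (Rle_dec 0 dy) as [Hy|Hy].
  - exists (acos (dx/r)). split; auto. rewrite cos_acos, sin_acos, Hs by auto.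
    rewrite Rabs_right by lra. split; field; lra.
  - exists (- acos (dx/r)). split; auto. rewrite cos_neg, sin_neg, cos_acos, sin_acos, Hs by auto.
    rewrite Rabs_left by lra. split; field; lra.
Qed.

Lemma cone_exists (k : nat) (alpha : R) (u w : point) : (0 < k)%nat -> u <> w ->
  exists i, in_cone k alpha u i w.
Proof.
  intros Hk Huw.
  destruct (polar_exists (fst w - fst u) (snd w - snd u)) as [r [phi0 [Hr [Hx Hy]]]].
  { destruct (Req_dec (fst w - fst u) 0); destruct (Req_dec (snd w - snd u) 0); auto.
    exfalso; apply Huw. destruct u, w; simpl in *. f_equal; lra. }
  assert (HkR : 0 < INR k) by (apply lt_0_INR; auto).
  set (th := 2 * PI / INR k).
  assert (Hth : 0 < th) by (unfold th; apply Rdiv_lt_0_compat; [pose PI_RGT_0; lra|auto]).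
  set (x := (phi0 - alpha) / th).
  destruct (archimed x) as [A1 A2].
  set (j := (up x - 1)%Z).
  assert (Hj1 : IZR j <= x) by (unfold j; rewrite minus_IZR; simpl; lra).
  assert (Hj2 : x < IZR j + 1) by (unfold j; rewrite minus_IZR; simpl; lra).
  assert (HkZ : (0 < Z.of_nat k)%Z) by lia.
  set (q := (j / Z.of_nat k)%Z). set (i' := (j mod Z.of_nat k)%Z).
  assert (Hdm : j = (Z.of_nat k * q + i')%Z) by (apply Z.div_mod; lia).
  destruct (Z.mod_pos_bound j (Z.of_nat k) HkZ) as [B1 B2]. fold i' in B1, B2.
  exists (Z.to_nat i'). split.
  { apply Nat2Z.inj_lt. rewrite Z2Nat.id; lia. }
  assert (HiR : INR (Z.to_nat i') = IZR i') by (rewrite INR_IZR_INZ, Z2Nat.id by lia; reflexivity).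
  assert (HjR : IZR j = INR k * IZR q + IZR i') by (rewrite Hdm, plus_IZR, mult_IZR, <- INR_IZR_INZ; ring).
  assert (Hkth : INR k * th = 2 * PI) by (unfold th; field; lra).
  assert (Hx1 : IZR j * th <= phi0 - alpha).
  { unfold x in Hj1. apply (Rmult_le_compat_r th) in Hj1; [|lra].
    unfold Rdiv in Hj1. rewrite Rmult_assoc, Rinv_l in Hj1; lra. }
  assert (Hx2 : phi0 - alpha < (IZR j + 1) * th).
  { unfold x in Hj2. apply (Rmult_lt_compat_r th) in Hj2; [|lra].
    unfold Rdiv in Hj2. rewrite Rmult_assoc, Rinv_l in Hj2; lra. }
  rewrite HjR in Hx1, Hx2.
  exists r, (phi0 + 2 * IZR (- q) * PI).
  destruct (cos_2piZ phi0 (-q)) as [C S].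
  rewrite C, S, S_INR, HiR, opp_IZR. fold th.
  assert (E : (INR k * IZR q + IZR i') * th = 2 * PI * IZR q + IZR i' * th).
  { rewrite Rmult_plus_distr_r, <- Hkth. ring. }
  assert (E2 : (INR k * IZR q + IZR i' + 1) * th = 2 * PI * IZR q + (IZR i' + 1) * th).
  { rewrite !Rmult_plus_distr_r, <- Hkth. ring. }
  repeat split; auto; lra.
Qed.

Lemma angle_eq (a b alpha : R) : alpha <= a < alpha + 2 * PI -> alpha <= b < alpha + 2 * PI ->
  cos a = cos b -> sin a = sin b -> a = b.
Proof.
  intros Ha Hb Hc Hs.
  assert (S0 : sin (a - b) = 0) by (rewrite sin_minus, Hc, Hs; ring).
  assert (C1 : cos (a - b) = 1) by (rewrite cos_minus, Hc, Hs; rewrite <- (sin2_cos2 b); unfold Rsqr; ring).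
  destruct (sin_eq_0_0 _ S0) as [m Hm].
  pose proof PI_RGT_0.
  assert (Hlt : -2 < IZR m < 2).
  { split; [apply (Rmult_lt_reg_r PI)|apply (Rmult_lt_reg_r PI)]; lra. }
  assert (Hm' : (-2 < m < 2)%Z) by (split; apply lt_IZR; simpl; lra).
  assert (m = 0%Z \/ m = 1%Z \/ m = (-1)%Z) as [E|[E|E]] by lia; subst m.
  - simpl in Hm. lra.
  - rewrite Hm in C1. simpl in C1. rewrite Rmult_1_l, cos_PI in C1. lra.
  - rewrite Hm in C1. simpl in C1. replace (-1 * PI) with (- PI) in C1 by ring.
    rewrite cos_neg, cos_PI in C1. lra.
Qed.

Lemma in_cone_unique (k : nat) (alpha : R) (u : point) (i j : nat) (w : point) :
  in_cone k alpha u i w -> in_cone k alpha u j w -> i = j.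
Proof.
  intros [Hi [r1 [p1 [Hr1 [A1 [A2 [X1 Y1]]]]]]] [Hj [r2 [p2 [Hr2 [B1 [B2 [X2 Y2]]]]]]].
  assert (Hk : (0 < k)%nat) by lia.
  assert (HkR : 0 < INR k) by (apply lt_0_INR; auto).
  set (th := 2 * PI / INR k) in *.
  assert (Hth : 0 < th) by (unfold th; apply Rdiv_lt_0_compat; [pose PI_RGT_0; lra|auto]).
  assert (Hkth : INR k * th = 2 * PI) by (unfold th; field; lra).
  rewrite S_INR in A2, B2.
  assert (Ei : INR i + 1 <= INR k) by (rewrite <- S_INR; apply le_INR; lia).
  assert (Ej : INR j + 1 <= INR k) by (rewrite <- S_INR; apply le_INR; lia).
  assert (0 <= INR i) by apply pos_INR. assert (0 <= INR j) by apply pos_INR.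
  assert (Eqr : r1 * cos p1 = r2 * cos p2 /\ r1 * sin p1 = r2 * sin p2) by lra.
  destruct Eqr as [Ec Es].
  assert (Rr : r1 = r2).
  { assert (r1 * r1 = r2 * r2).
    { pose proof (sin2_cos2 p1). pose proof (sin2_cos2 p2). unfold Rsqr in *.
      transitivity ((r1 * cos p1)^2 + (r1 * sin p1)^2). 
      - replace ((r1 * cos p1)^2 + (r1 * sin p1)^2) with (r1*r1*(sin p1 * sin p1 + cos p1 * cos p1)) by ring. rewrite H1. ring.
      - rewrite Ec, Es. replace ((r2 * cos p2)^2 + (r2 * sin p2)^2) with (r2*r2*(sin p2 * sin p2 + cos p2 * cos p2)) by ring. rewrite H2. ring. }
    nra. }
  subst r2.
  assert (Cc : cos p1 = cos p2) by (apply (Rmult_eq_reg_l r1); lra).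
  assert (Ss : sin p1 = sin p2) by (apply (Rmult_eq_reg_l r1); lra).
  assert (P : p1 = p2).
  { apply (angle_eq p1 p2 alpha); auto; split; try lra; nra. }
  subst p2.
  assert (INR i < INR j + 1) by nra.
  assert (INR j < INR i + 1) by nra.
  rewrite <- S_INR in *. apply INR_lt in H1. apply INR_lt in H2. lia.
Qed.

Lemma same_cone_trans (k : nat) (alpha : R) (u a b c : point) :
  same_cone k alpha u a b -> same_cone k alpha u b c -> same_cone k alpha u a c.
Proof.
  intros [i [H1 H2]] [j [H3 H4]].
  assert (i = j) by (eapply in_cone_unique; eauto). subst. exists j; auto.
Qed.

Lemma same_cone_sym (k : nat) (alpha : R) (u a b : point) :
  same_cone k alpha u a b -> same_cone k alpha u b a.
Proof. intros [i [H1 H2]]. exists i; auto. Qed.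

Lemma dist_polar (u v : point) r p : fst v = fst u + r * cos p -> snd v = snd u + r * sin p -> 0 <= r ->
  Defs.dist u v = r.
Proof.
  intros H1 H2 H3. unfold Defs.dist. rewrite H1, H2.
  replace ((fst u - (fst u + r * cos p)) ^ 2 + (snd u - (snd u + r * sin p)) ^ 2) with (r * r * ((sin p)² + (cos p)²)) by (unfold Rsqr; ring).
  rewrite sin2_cos2, Rmult_1_r. apply sqrt_square; auto.
Qed.

Lemma cone_dist (k : nat) (alpha : R) (u v w : point) : (2 <= k)%nat ->
  same_cone k alpha u v w -> Defs.dist u w <= Defs.dist u v ->
  Defs.dist v w <= Defs.dist u v - (cos (2 * PI / INR k) - sin (2 * PI / INR k)) * Defs.dist u w.
Proof.
  intros Hk [i [[Hi [r1 [p1 [Hr1 [A1 [A2 [X1 Y1]]]]]]] [Hj [r2 [p2 [Hr2 [B1 [B2 [X2 Y2]]]]]]]]] Hd.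
  rewrite (dist_polar u v r1 p1), (dist_polar u w r2 p2) in * by lra.
  assert (HkR : 2 <= INR k) by (replace 2 with (INR 2) by (simpl; ring); apply le_INR; auto).
  set (th := 2 * PI / INR k) in *.
  pose proof PI_RGT_0.
  assert (Hth : 0 < th) by (unfold th; apply Rdiv_lt_0_compat; lra).
  assert (Hthpi : th <= PI).
  { unfold th. apply (Rmult_le_reg_r (INR k)); [lra|]. unfold Rdiv. rewrite Rmult_assoc, Rinv_l by lra. nra. }
  rewrite S_INR in A2, B2.
  assert (Hdp : Rabs (p1 - p2) < th) by (apply Rabs_def1; lra).
  assert (HC : cos th <= cos (p1 - p2)).
  { assert (E : cos (p1 - p2) = cos (Rabs (p1 - p2))).
    { destruct (Rcase_abs (p1 - p2)); [rewrite Rabs_left, cos_neg|rewrite Rabs_right]; auto. }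
    rewrite E. left. apply cos_decreasing_1; try lra; apply Rabs_pos. }
  assert (Hs : 0 <= sin th) by (apply sin_ge_0; lra).
  assert (Hc1 : cos th <= 1) by (apply COS_bound).
  assert (Hsc : (sin th)^2 + (cos th)^2 = 1) by (rewrite <- (sin2_cos2 th); unfold Rsqr; ring).
  set (c := cos th - sin th).
  unfold Defs.dist. rewrite X1, Y1, X2, Y2.
  replace ((fst u + r1 * cos p1 - (fst u + r2 * cos p2)) ^ 2 + (snd u + r1 * sin p1 - (snd u + r2 * sin p2)) ^ 2)
    with (r1 * r1 * ((sin p1)² + (cos p1)²) + r2 * r2 * ((sin p2)² + (cos p2)²) - 2 * r1 * r2 * cos (p1 - p2))
    by (rewrite cos_minus; unfold Rsqr; ring).
  rewrite !sin2_cos2.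
  assert (Hpos : 0 <= r1 - c * r2) by (unfold c; nra).
  rewrite <- (sqrt_square (r1 - c * r2)) by auto.
  apply sqrt_le_1_alt.
  assert (K1 : r2 * r2 * (1 - c * c) = 2 * r2 * r2 * sin th * cos th) by (unfold c; nra).
  assert (K2 : 2 * r2 * r2 * sin th * cos th <= 2 * r2 * r2 * sin th).
  { assert (0 <= 2 * r2 * r2 * sin th) by (repeat apply Rmult_le_pos; lra). nra. }
  assert (K3 : 2 * r2 * r2 * sin th <= 2 * r1 * r2 * sin th).
  { assert (0 <= 2 * r2 * sin th) by (repeat apply Rmult_le_pos; lra). nra. }
  assert (K4 : 2 * r1 * r2 * sin th <= 2 * r1 * r2 * (cos (p1 - p2) - c)).
  { assert (0 <= 2 * r1 * r2) by (repeat apply Rmult_le_pos; lra). unfold c. nra. }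
  nra.
Qed.

Lemma lex_total (a b : triple) : lex_lt a b \/ a = b \/ lex_lt b a.
Proof.
  destruct a as [[a1 a2] a3], b as [[b1 b2] b3]; simpl.
  destruct (Rtotal_order a1 b1) as [H|[H|H]]; [left; left; auto| |right; right; left; auto].
  subst. destruct (Nat.lt_total a2 b2) as [H|[H|H]]; [left; right; auto| |right; right; right; auto].
  subst. destruct (Nat.lt_total a3 b3) as [H|[H|H]]; [left; right; auto| |right; right; right; auto].
  subst; auto.
Qed.

Lemma lex_lt_irrefl (a : triple) : ~ lex_lt a a.
Proof. destruct a as [[a1 a2] a3]; simpl. intros [H|[_ [H|[_ H]]]]; lra || lia. Qed.

Lemma lex_lt_trans (a b c : triple) : lex_lt a b -> lex_lt b c -> lex_lt a c.
Proof.
  destruct a as [[a1 a2] a3], b as [[b1 b2] b3], c as [[c1 c2] c3]; simpl.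
  intros [H|[E [H|[E2 H]]]] [H'|[E' [H'|[E2' H']]]]; subst;
  try (left; lra); right; split; auto; try (left; lia); right; split; auto; lia.
Qed.

Lemma lex_le_trans (a b c : triple) : lex_le a b -> lex_le b c -> lex_le a c.
Proof.
  unfold lex_le. intros [H|H] [H'|H']; subst; auto. left; eapply lex_lt_trans; eauto.
Qed.

Lemma lex_le_antisym (a b : triple) : lex_le a b -> lex_le b a -> a = b.
Proof.
  unfold lex_le. intros [H|H] [H'|H']; auto.
  exfalso; apply (lex_lt_irrefl a); eapply lex_lt_trans; eauto.
Qed.

Lemma not_lex_le (a b : triple) : ~ lex_le a b -> lex_lt b a.
Proof.
  unfold lex_le. intros H. destruct (lex_total a b) as [H1|[H1|H1]]; auto; tauto.
Qed.

Lemma lex_le_lt_trans (a b c : triple) : lex_le a b -> lex_lt b c -> lex_lt a c.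
Proof. intros [H|H] H'; subst; auto. eapply lex_lt_trans; eauto. Qed.

Lemma lex_le_fst (a b : triple) : lex_le a b -> fst (fst a) <= fst (fst b).
Proof.
  destruct a as [[a1 a2] a3], b as [[b1 b2] b3]; unfold lex_le; simpl.
  intros [[H|[H _]]|H]; [lra|lra|injection H; intros; lra].
Qed.

Lemma dist_sym (u v : point) : Defs.dist u v = Defs.dist v u.
Proof. unfold Defs.dist. f_equal. ring. Qed.

Lemma dist_nonneg (u v : point) : 0 <= Defs.dist u v.
Proof. unfold Defs.dist. apply sqrt_pos. Qed.

Lemma dist_pos (u v : point) : u <> v -> 0 < Defs.dist u v.
Proof.
  intros H. unfold Defs.dist. apply sqrt_lt_R0.
  destruct u as [a b], v as [c d]; simpl.
  destruct (Req_dec a c); destruct (Req_dec b d); subst.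
  - exfalso; auto.
  - assert (0 < (b - d)*(b-d)) by (apply Rsqr_pos_lt; lra). nra.
  - assert (0 < (a - c)*(a-c)) by (apply Rsqr_pos_lt; lra). nra.
  - assert (0 < (a - c)*(a-c)) by (apply Rsqr_pos_lt; lra). nra.
Qed.

Lemma eID_cases ID (u v : point) : eID ID u v = dID ID u v \/ eID ID u v = dID ID v u.
Proof. unfold eID, lex_min. destruct excluded_middle_informative; auto. Qed.

Lemma eID_fst ID (u v : point) : fst (fst (eID ID u v)) = Defs.dist u v.
Proof. destruct (eID_cases ID u v) as [H|H]; rewrite H; simpl; auto using dist_sym. Qed.

Lemma eID_le_dist ID (a b c d : point) : lex_le (eID ID a b) (eID ID c d) -> Defs.dist a b <= Defs.dist c d.
Proof. intros H. apply lex_le_fst in H. rewrite !eID_fst in H. auto. Qed.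

Lemma eID_inj_r (V : list point) ID (u v1 v2 : point) :
  (forall u v, In u V -> In v V -> ID u = ID v -> u = v) ->
  In u V -> In v1 V -> In v2 V -> u <> v1 -> u <> v2 ->
  eID ID u v1 = eID ID u v2 -> v1 = v2.
Proof.
  intros Hinj H0 H1 H2 N1 N2 E.
  destruct (eID_cases ID u v1) as [A|A]; destruct (eID_cases ID u v2) as [B|B];
  rewrite A, B in E; unfold dID in E; injection E; intros;
  first [ apply Hinj; auto; congruence
        | exfalso; apply N1; apply Hinj; auto; congruence
        | exfalso; apply N2; apply Hinj; auto; congruence ].
Qed.

Lemma eID_inj_l (V : list point) ID (u v1 v2 : point) :
  (forall u v, In u V -> In v V -> ID u = ID v -> u = v) ->
  In u V -> In v1 V -> In v2 V -> u <> v1 -> u <> v2 ->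
  eID ID v1 u = eID ID v2 u -> v1 = v2.
Proof.
  intros Hinj H0 H1 H2 N1 N2 E.
  destruct (eID_cases ID v1 u) as [A|A]; destruct (eID_cases ID v2 u) as [B|B];
  rewrite A, B in E; unfold dID in E; injection E; intros;
  first [ apply Hinj; auto; congruence
        | exfalso; apply N1; apply Hinj; auto; congruence
        | exfalso; apply N2; apply Hinj; auto; congruence ].
Qed.

Lemma lex_lt_le_trans (a b c : triple) : lex_lt a b -> lex_le b c -> lex_lt a c.
Proof. intros H [H'|H']; subst; auto. eapply lex_lt_trans; eauto. Qed.

Lemma not_lex_lt (a b : triple) : ~ lex_lt a b -> lex_le b a.
Proof. unfold lex_le. intros H. destruct (lex_total a b) as [H1|[H1|H1]]; auto; tauto. Qed.

Lemma list_min (P : point -> Prop) (f : point -> triple) (L : list point) :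
  (exists x, In x L /\ P x) ->
  exists m, In m L /\ P m /\ forall y, In y L -> P y -> lex_le (f m) (f y).
Proof.
  induction L as [|a L IH]; intros [x [Hx Px]]; [destruct Hx|].
  destruct (classic (exists x, In x L /\ P x)) as [He|Hn].
  - destruct (IH He) as [m [Hm [Pm Hmin]]].
    destruct (classic (P a /\ lex_lt (f a) (f m))) as [[Pa Hlt]|Hno].
    + exists a. split; [left; auto|split; auto]. intros y [<-|Hy] Py; [right; auto|].
      left. eapply lex_lt_le_trans; eauto.
    + exists m. split; [right; auto|split; auto]. intros y [<-|Hy] Py; auto.
      apply not_lex_lt. intros Hl; apply Hno; auto.
  - destruct Hx as [Ex|Hx]; [subst x|exfalso; apply Hn; eauto].
    exists a. split; [left; auto|split; auto]. intros y [<-|Hy] Py; [right; auto|].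
    exfalso; apply Hn; eauto.
Qed.

Lemma last_nonempty (a : point) (l : list point) (d d' : point) : last (a :: l) d = last (a :: l) d'.
Proof. revert a. induction l as [|b l IH]; intros a; auto. simpl. apply (IH b). Qed.

Lemma last_cons' (a : point) (l : list point) (d : point) : last (a :: l) d = last l a.
Proof. destruct l as [|b l]; [reflexivity|]. change (last (b::l) d = last (b::l) a). apply last_nonempty. Qed.

Lemma last_app (p q : list point) (x : point) : last (p ++ q) x = last q (last p x).
Proof.
  revert x. induction p as [|a p IH]; intros x; [reflexivity|].
  change ((a::p)++q) with (a::(p++q)). rewrite !last_cons'. apply IH.
Qed.

Lemma chain_app (E : point -> point -> Prop) (x : point) (p q : list point) :
  chain E x p -> chain E (last p x) q -> chain E x (p ++ q).
Proof.
  revert x. induction p as [|a p IH]; intros x Hp Hq; [exact Hq|].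
  destruct Hp as [H1 H2]. split; auto. apply IH; auto. rewrite last_cons' in Hq. auto.
Qed.

Lemma is_path_app (E : point -> point -> Prop) (u w v : point) (p q : list point) :
  is_path E u w p -> is_path E w v q -> is_path E u v (p ++ q).
Proof.
  intros [H1 H2] [H3 H4]. split.
  - apply chain_app; auto. rewrite H2; auto.
  - rewrite last_app, H2; auto.
Qed.

Lemma path_cost_app (c : point -> point -> R) (u : point) (p q : list point) :
  path_cost c u (p ++ q) = path_cost c u p + path_cost c (last p u) q.
Proof.
  revert u. induction p as [|a p IH]; intros u; [simpl; ring|].
  change ((a::p)++q) with (a::(p++q)). simpl path_cost at 1 2. rewrite IH, last_cons'. ring.
Qed.

Definition meas (V : list point) (u v : point) : nat :=
  length (filter (fun pr => if Rlt_dec (Defs.dist (fst pr) (snd pr)) (Defs.dist u v) then true else false) (list_prod V V)).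

Lemma filter_le {A : Type} (f g : A -> bool) (l : list A) :
  (forall x, In x l -> f x = true -> g x = true) -> (length (filter f l) <= length (filter g l))%nat.
Proof.
  induction l as [|b l IH]; intros H; simpl; auto.
  assert (IH' : (length (filter f l) <= length (filter g l))%nat) by (apply IH; intros; apply H; simpl; auto).
  destruct (f b) eqn:Ef.
  - rewrite (H b (or_introl eq_refl) Ef). simpl. lia.
  - destruct (g b); simpl; lia.
Qed.

Lemma filter_lt {A : Type} (f g : A -> bool) (l : list A) (y : A) :
  (forall x, In x l -> f x = true -> g x = true) -> In y l -> f y = false -> g y = true ->
  (length (filter f l) < length (filter g l))%nat.
Proof.
  induction l as [|a l IH]; intros Hfg Hy Hf Hg; [destruct Hy|].
  assert (Hle : (length (filter f l) <= length (filter g l))%nat) by (apply filter_le; intros; apply Hfg; simpl; auto).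
  simpl. destruct Hy as [<-|Hy].
  - rewrite Hf, Hg. simpl. lia.
  - assert (IH' : (length (filter f l) < length (filter g l))%nat) by (apply IH; auto; intros; apply Hfg; simpl; auto).
    destruct (f a) eqn:Ef.
    + rewrite (Hfg a (or_introl eq_refl) Ef). simpl. lia.
    + destruct (g a); simpl; lia.
Qed.

Lemma meas_lt (V : list point) (a b u v : point) : In a V -> In b V ->
  Defs.dist a b < Defs.dist u v -> (meas V a b < meas V u v)%nat.
Proof.
  intros Ha Hb Hd. unfold meas. apply (filter_lt _ _ _ (a, b)).
  - intros [x y] _. simpl. destruct Rlt_dec; [|discriminate]. destruct Rlt_dec; auto. lra.
  - apply in_prod; auto.
  - simpl. destruct Rlt_dec; auto. lra.
  - simpl. destruct Rlt_dec; auto.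
Qed.

Lemma udg_In_l V u v : udg_edge V u v -> In u V. Proof. intros [H _]; auto. Qed.
Lemma udg_In_r V u v : udg_edge V u v -> In v V. Proof. intros [_ [H _]]; auto. Qed.
Lemma udg_neq V u v : udg_edge V u v -> u <> v. Proof. intros [_ [_ [H _]]]; auto. Qed.
Lemma udg_le1 V u v : udg_edge V u v -> Defs.dist u v <= 1. Proof. intros [_ [_ [_ H]]]; auto. Qed.

Lemma edge_span (lambda t c alpha : R) (k : nat) (V : list point) (ID : point -> nat) :
  0 < lambda -> 0 < c -> c <= 1 -> 1 <= t -> 1 <= t * c -> t * (1 - c) <= lambda * (t * c - 1) ->
  (2 <= k)%nat -> c = cos (2 * PI / INR k) - sin (2 * PI / INR k) ->
  civilized lambda V ->
  (forall u v, In u V -> In v V -> ID u = ID v -> u = v) ->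
  forall n u v, (meas V u v < n)%nat -> udg_edge V u v ->
  exists q, is_path (yy_edge V k alpha ID) u v q /\ path_length u q <= t * Defs.dist u v.
Proof.
  intros Hl Hc Hc1 Ht Htc Hkey Hk Hcdef Hciv Hinj n.
  induction n as [|n IH]; intros u v Hm Huv; [lia|].
  set (YY := yy_edge V k alpha ID).
  destruct (list_min (fun w => udg_edge V u w /\ (w = v \/ same_cone k alpha u v w)) (fun w => eID ID u w) V)
    as [w [HwV [[Huw Hwv] Hwmin]]].
  { exists v. split; [eapply udg_In_r; eauto|split; auto]. }
  assert (Hyao : yao_edge V k alpha ID u w).
  { split; auto. intros w' Huw' Hsc. apply Hwmin; [eapply udg_In_r; eauto|]. split; auto.
    right. destruct Hwv as [<-|Hwv]; auto. eapply same_cone_trans; eauto. }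
  assert (Hdwv : Defs.dist u w <= Defs.dist u v).
  { apply (eID_le_dist ID). apply Hwmin; [eapply udg_In_r; eauto|split; auto]. }
  assert (Hpuw : 0 < Defs.dist u w) by (apply dist_pos; eapply udg_neq; eauto).
  assert (Hmeas : forall a b, In a V -> In b V -> Defs.dist a b < Defs.dist u v -> (meas V a b < n)%nat).
  { intros a b Ha Hb Hd. pose proof (meas_lt V a b u v Ha Hb Hd). lia. }
  assert (Hcont : w = v \/ (w <> v /\ udg_edge V w v /\ Defs.dist w v <= Defs.dist u v - c * Defs.dist u w)).
  { destruct (classic (w = v)) as [E|N]; [left; auto|right].
    destruct Hwv as [E|Hsc]; [contradiction|].
    assert (D : Defs.dist v w <= Defs.dist u v - c * Defs.dist u w) by (rewrite Hcdef; apply (cone_dist k alpha); auto).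
    rewrite (dist_sym w v). split; auto. split; auto.
    split; [auto|split; [eapply udg_In_r; eauto|split; auto]].
    rewrite (dist_sym w v). pose proof (udg_le1 _ _ _ Huv). nra. }
  destruct (classic (yy_dedge V k alpha ID u w)) as [Hyy|Hnyy].
  -
    destruct Hcont as [<-|[N [Hwv' Dwv]]].
    + exists [w]. split; [split; [split; [left; auto|exact I]|reflexivity]|].
      unfold path_length; simpl. pose proof (dist_nonneg u w). nra.
    + destruct (IH w v) as [q [Hq Lq]]; auto.
      { apply Hmeas; [auto|eapply udg_In_r; eauto|nra]. }
      exists (w :: q). split.
      * apply (is_path_app _ u w v [w] q); auto. split; [split; [left; auto|exact I]|reflexivity].
      * unfold path_length in *. simpl. nra.
  -
    assert (Hx0 : exists x0, yao_edge V k alpha ID x0 w /\ same_cone k alpha w u x0 /\ lex_lt (eID ID x0 w) (eID ID u w)).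
    { apply NNPP. intros Hn. apply Hnyy. split; auto. intros x Hx Hsc.
      apply not_lex_lt. intros Hlt. apply Hn. exists x; auto. }
    destruct Hx0 as [x0 [Hyx0 [Hscx0 Hltx0]]].
    destruct (list_min (fun x => yao_edge V k alpha ID x w /\ same_cone k alpha w u x) (fun x => eID ID x w) V)
      as [x [HxV [[Hyx Hscx] Hxmin]]].
    { exists x0. split; [destruct Hyx0 as [H _]; eapply udg_In_l; eauto|split; auto]. }
    assert (Hyyx : yy_dedge V k alpha ID x w).
    { split; auto. intros y Hy Hsc. apply Hxmin; [destruct Hy as [H _]; eapply udg_In_l; eauto|].
      split; auto. eapply same_cone_trans; eauto. }
    assert (Hltx : lex_lt (eID ID x w) (eID ID u w)).
    { assert (Hx0V : In x0 V) by (destruct Hyx0 as [H _]; eapply udg_In_l; eauto).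
      eapply lex_le_lt_trans; [apply (Hxmin x0 Hx0V); split; auto|]; eauto. }
    assert (Hxu : x <> u) by (intros E; subst x; apply (lex_lt_irrefl _ Hltx)).
    assert (Hxw : x <> w) by (destruct Hyx as [H _]; eapply udg_neq; eauto).
    assert (Hdxw : Defs.dist x w <= Defs.dist u w) by (apply (eID_le_dist ID); left; auto).
    assert (Hlam : lambda <= Defs.dist w x) by (apply Hciv; auto; eapply udg_In_r; eauto).
    assert (Dux : Defs.dist u x <= Defs.dist w u - c * Defs.dist w x).
    { rewrite Hcdef. apply (cone_dist k alpha); auto. rewrite (dist_sym w x), (dist_sym w u). auto. }
    rewrite (dist_sym w u) in Dux.
    assert (Hux : udg_edge V u x).
    { split; [eapply udg_In_l; eauto|split; auto]. split; [auto|].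
      pose proof (udg_le1 _ _ _ Huv). nra. }
    destruct (IH u x) as [q1 [Hq1 Lq1]]; auto.
    { apply Hmeas; [eapply udg_In_l; eauto|auto|nra]. }
    assert (Hxw_path : is_path YY x w [w]) by (split; [split; [left; auto|exact I]|reflexivity]).
    rewrite (dist_sym x w) in Hdxw.
    destruct Hcont as [<-|[N [Hwv' Dwv]]].
    + exists (q1 ++ [w]). split; [eapply is_path_app; eauto|].
      unfold path_length in *. rewrite path_cost_app. destruct Hq1 as [_ E]. rewrite E. simpl.
      rewrite (dist_sym x w). nra.
    + destruct (IH w v) as [q2 [Hq2 Lq2]]; auto.
      { apply Hmeas; [auto|eapply udg_In_r; eauto|nra]. }
      exists (q1 ++ (w :: q2)). split.
      * eapply is_path_app; eauto. apply (is_path_app _ x w v [w] q2); auto.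
      * unfold path_length in *. rewrite path_cost_app. destruct Hq1 as [_ E]. rewrite E. simpl.
        rewrite (dist_sym x w).
        pose proof (udg_le1 _ _ _ Huw).
        assert (t * (1 - c) * Defs.dist u w <= t * (1 - c)) by (assert (0 <= t*(1-c)) by nra; nra).
        assert (lambda * (t * c - 1) <= Defs.dist w x * (t * c - 1)) by nra.
        nra.
Qed.

Lemma path_compose (G H : point -> point -> Prop) (cG cH : point -> point -> R) (r : R) :
  (forall a b, G a b -> exists q, is_path H a b q /\ path_cost cH a q <= r * cG a b) ->
  forall p u v, is_path G u v p -> exists q, is_path H u v q /\ path_cost cH u q <= r * path_cost cG u p.
Proof.
  intros Hedge p. induction p as [|a p IH]; intros u v [Hc Hl].
  - exists []. simpl in Hl. subst. split; [split; simpl; auto|simpl; lra].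
  - destruct Hc as [Hua Hc]. rewrite last_cons' in Hl.
    destruct (Hedge u a Hua) as [q1 [Hq1 L1]].
    destruct (IH a v) as [q2 [Hq2 L2]]; [split; auto|].
    exists (q1 ++ q2). split; [eapply is_path_app; eauto|].
    rewrite path_cost_app. destruct Hq1 as [_ E]. rewrite E. simpl. lra.
Qed.

Lemma Rpower_super (a b beta : R) : 0 < a -> 0 < b -> 1 <= beta ->
  Rpower a beta + Rpower b beta <= Rpower (a + b) beta.
Proof.
  intros Ha Hb Hbeta.
  assert (Ex : forall x, 0 < x -> Rpower x beta = x * Rpower x (beta - 1)).
  { intros x Hx. replace beta with (1 + (beta - 1)) at 1 by ring. rewrite Rpower_plus, Rpower_1; auto. }
  rewrite (Ex a), (Ex b), (Ex (a+b)) by lra.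
  assert (Pa : Rpower a (beta - 1) <= Rpower (a+b) (beta - 1)) by (apply Rle_Rpower_l; lra).
  assert (Pb : Rpower b (beta - 1) <= Rpower (a+b) (beta - 1)) by (apply Rle_Rpower_l; lra).
  nra.
Qed.

Lemma power_le_length (H : point -> point -> Prop) (beta : R) :
  (forall a b, H a b -> a <> b) -> 1 <= beta ->
  forall q u, q <> [] -> chain H u q ->
  path_power beta u q <= Rpower (path_length u q) beta /\ 0 < path_length u q.
Proof.
  intros Hne Hb q. induction q as [|y q IH]; intros u Hq Hc; [congruence|].
  destruct Hc as [Huy Hc]. pose proof (dist_pos u y (Hne _ _ Huy)) as Hd.
  destruct q as [|z q].
  - unfold path_power, path_length. simpl. rewrite !Rplus_0_r. split; lra.
  - destruct (IH y) as [P1 P2]; [congruence|auto|].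
    unfold path_power, path_length in *. simpl path_cost at 1 3. simpl path_cost in P1, P2.
    split; [|lra].
    eapply Rle_trans; [apply Rplus_le_compat_l; exact P1|]. apply Rpower_super; auto.
Qed.

Lemma NoDup_map_on {A B : Type} (f : A -> B) (L : list A) :
  NoDup L -> (forall x y, In x L -> In y L -> f x = f y -> x = y) -> NoDup (map f L).
Proof.
  induction L as [|a L IH]; intros Hn Hi; simpl; [constructor|].
  inversion Hn; subst. constructor.
  - intros Hin. apply in_map_iff in Hin. destruct Hin as [x [Hx HxL]].
    assert (x = a) by (apply Hi; simpl; auto). subst. contradiction.
  - apply IH; auto. intros; apply Hi; simpl; auto.
Qed.

Lemma degree_bound (alpha : R) (k : nat) (V : list point) (ID : point -> nat) :
  (0 < k)%nat ->
  (forall u v, In u V -> In v V -> ID u = ID v -> u = v) ->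
  max_degree_le V (yy_edge V k alpha ID) (2 * k).
Proof.
  intros Hk Hinj u Hu L HL HE.
  set (idx := fun v => epsilon (inhabits 0%nat) (fun i => in_cone k alpha u i v)).
  assert (Hidx : forall v, u <> v -> in_cone k alpha u (idx v) v).
  { intros v Hv. unfold idx. apply (epsilon_spec (inhabits 0%nat) (fun i => in_cone k alpha u i v)).
    apply cone_exists; auto. }
  assert (Hudg : forall v, In v L -> udg_edge V u v /\ udg_edge V v u).
  { intros v Hv. destruct (HE v Hv) as [[[H _] _]|[[H _] _]];
    destruct H as [A [B [C D]]]; (split; [|]; split; auto; split; auto; split; auto; rewrite dist_sym; auto). }
  set (slot := fun v => if excluded_middle_informative (yy_dedge V k alpha ID u v) then idx v else (k + idx v)%nat).
  assert (Hlt : forall v, In v L -> (slot v < 2 * k)%nat).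
  { intros v Hv. destruct (Hudg v Hv) as [H1 _]. destruct (Hidx v (udg_neq _ _ _ H1)) as [Hi _].
    unfold slot. destruct excluded_middle_informative; lia. }
  assert (Hinj2 : forall x y, In x L -> In y L -> slot x = slot y -> x = y).
  { intros x y Hx Hy E.
    destruct (Hudg x Hx) as [Ux Ux']. destruct (Hudg y Hy) as [Uy Uy'].
    pose proof (Hidx x (udg_neq _ _ _ Ux)) as Cx. pose proof (Hidx y (udg_neq _ _ _ Uy)) as Cy.
    pose proof (proj1 Cx) as Bx. pose proof (proj1 Cy) as By.
    unfold slot in E.
    destruct excluded_middle_informative as [Dx|Dx]; destruct excluded_middle_informative as [Dy|Dy]; try lia.
    - assert (Hsc : same_cone k alpha u x y) by (exists (idx x); split; auto; rewrite E; auto).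
      apply (eID_inj_r V ID u x y); auto; try (eapply udg_In_r; eauto); try (eapply udg_neq; eauto).
      apply lex_le_antisym.
      + apply (proj2 (proj1 Dx)); auto.
      + apply (proj2 (proj1 Dy)); auto. apply same_cone_sym; auto.
    - assert (Ex : idx x = idx y) by lia.
      assert (Hsc : same_cone k alpha u x y) by (exists (idx x); split; auto; rewrite Ex; auto).
      assert (Rx : yy_dedge V k alpha ID x u) by (destruct (HE x Hx); tauto).
      assert (Ry : yy_dedge V k alpha ID y u) by (destruct (HE y Hy); tauto).
      apply (eID_inj_l V ID u x y); auto; try (eapply udg_In_r; eauto); try (eapply udg_neq; eauto).
      apply lex_le_antisym.
      + apply (proj2 Rx); auto. apply (proj1 Ry).
      + apply (proj2 Ry); [apply (proj1 Rx)|]. apply same_cone_sym; auto. }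
  rewrite <- (length_map slot L). replace (2 * k)%nat with (length (seq 0 (2 * k))) by apply length_seq.
  apply NoDup_incl_length.
  - apply NoDup_map_on; auto.
  - intros s Hs. apply in_map_iff in Hs. destruct Hs as [v [<- Hv]]. apply in_seq. specialize (Hlt v Hv). lia.
Qed.

Lemma yy_neq V k alpha ID a b : yy_edge V k alpha ID a b -> a <> b.
Proof. intros [[[H _] _]|[[H _] _]]; apply udg_neq in H; auto. Qed.

Theorem corollary1 (lambda eps beta alpha : R) (k : nat) (V : list point) (ID : point -> nat) :
  0 < lambda -> 0 < eps -> (8 < k)%nat ->
  cos (2 * PI / INR k) - sin (2 * PI / INR k) =
    (lambda + eps + 1) / ((lambda + 1) * (eps + 1)) ->
  2 <= beta <= 5 ->
  NoDup V ->
  connected V ->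
  civilized lambda V ->
  (forall u v, In u V -> In v V -> ID u = ID v -> u = v) ->
  max_degree_le V (yy_edge V k alpha ID) (2 * k) /\
  length_spanner V (yy_edge V k alpha ID) (udg_edge V) (1 + eps) /\
  power_stretch V beta (yy_edge V k alpha ID) (udg_edge V) (Rpower (1 + eps) beta).
Proof.
  intros Hl He Hk Hc Hb HND Hconn Hciv Hinj.
  set (c := cos (2 * PI / INR k) - sin (2 * PI / INR k)) in *.
  set (t := 1 + eps).
  assert (Htc : t * c = (lambda + eps + 1) / (lambda + 1)) by (unfold t; rewrite Hc; field; lra).
  assert (Hc0 : 0 < c) by (rewrite Hc; apply Rdiv_lt_0_compat; nra).
  assert (Hc1 : c <= 1).
  { rewrite Hc. apply (Rmult_le_reg_r ((lambda + 1) * (eps + 1))); [nra|].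
    unfold Rdiv. rewrite Rmult_assoc, Rinv_l by nra. nra. }
  assert (Htc1 : 1 <= t * c).
  { rewrite Htc. apply (Rmult_le_reg_r (lambda + 1)); [lra|].
    unfold Rdiv. rewrite Rmult_assoc, Rinv_l by lra. lra. }
  assert (Hkey : t * (1 - c) <= lambda * (t * c - 1)).
  { right. replace (t * (1 - c)) with (t - t * c) by ring. rewrite Htc. unfold t. field. lra. }
  assert (Hedge : forall a b, udg_edge V a b -> exists q, is_path (yy_edge V k alpha ID) a b q /\
      path_length a q <= t * Defs.dist a b).
  { intros a b Hab. apply (edge_span lambda t c alpha k V ID Hl Hc0 Hc1 ltac:(unfold t; lra) Htc1 Hkey ltac:(lia) eq_refl Hciv Hinj (S (meas V a b))); auto. }
  split; [apply degree_bound; auto; lia|split].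
  - intros u v Hu Hv p Hp. apply (path_compose (udg_edge V) _ Defs.dist Defs.dist t); auto.
  - intros u v Hu Hv p Hp. apply (path_compose (udg_edge V) _ (fun x y => Rpower (Defs.dist x y) beta) (fun x y => Rpower (Defs.dist x y) beta)); auto.
    intros a b Hab. destruct (Hedge a b Hab) as [q [Hq Lq]]. exists q. split; auto.
    assert (Hqne : q <> []).
    { intros E. subst q. destruct Hq as [_ E]. simpl in E. apply (udg_neq _ _ _ Hab); auto. }
    destruct (power_le_length (yy_edge V k alpha ID) beta (yy_neq V k alpha ID) ltac:(lra) q a Hqne (proj1 Hq)) as [P1 P2].
    change (path_power beta a q <= Rpower t beta * Rpower (Defs.dist a b) beta).
    pose proof (dist_pos a b (udg_neq _ _ _ Hab)).
    rewrite Rpower_mult_distr by (unfold t; lra).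
    eapply Rle_trans; [exact P1|]. apply Rle_Rpower_l; lra.
Qed.
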